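(* Let $\mathcal Z=\{z\in\{0,1\}^{V}: z_v z_{v'}=0 \text{ for all } v\in V,\ v'\in\mathcal A(v)\}$ and let $\mathrm{conv}(\mathcal Z)\subset\mathbb R^{V}$ be its convex hull. Then $$\mathrm{conv}(\mathcal Z)=\Big\{\gamma\in\mathbb R^V:\ \gamma_v=\kappa_v\prod_{v'\in\mathcal A(v)}(1-\kappa_{v'})\ \forall v\in V,\ \text{for some }\kappa\in[0,1]^{V}\Big\}=\Big\{\gamma\in[0,1]^{V}:\ \sum_{v'\in\bar{\mathcal A}(v)}\gamma_{v'}\le 1\ \ \forall v\in V\Big\}.$$
   Context: $G=(V,E)$ is a finite directed rooted tree with vertex set $V=\{1,\dots,|V|\}$ and root $1$, edges oriented from parent to child. For $v\in V$: $\mathcal A(v)$ is the set of strict ancestors of $v$, $\bar{\mathcal A}(v)=\mathcal A(v)\cup\{v\}$, $\mathcal D(v)$ is the set of strict descendants of $v$, $\bar{\mathcal D}(v)=\mathcal D(v)\cup\{v\}$, and $d(v)$ is the number of children of $v$. *)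

(* Defs.v *)
From HB Require Import structures.
From mathcomp Require Import all_boot all_order all_algebra.
Set Implicit Arguments. Unset Strict Implicit. Unset Printing Implicit Defensive.
Import Order.TTheory GRing.Theory Num.Theory.
Local Open Scope ring_scope.

(* A finite rooted tree on vertex type T is encoded by its parent map:
   the root is a fixed point of [parent], and every vertex reaches the root
   by iterating [parent].  The edges are (parent v, v) for v <> root. *)
Definition is_rooted_tree (T : finType) (root : T) (parent : T -> T) : Prop :=
  parent root = root /\ forall v : T, fconnect parent v root.

Definition ancb (T : finType) (parent : T -> T) (v : T) : {set T} :=
  [set u | fconnect parent v u].

Definition anc (T : finType) (parent : T -> T) (v : T) : {set T} :=
  ancb parent v :\ v.

Definition Zset (T : finType) (parent : T -> T) : pred {ffun T -> bool} :=
  fun z => [forall v, forall u, (u \in anc parent v) ==> ~~ (z v && z u)].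

Definition in_conv_Z (R : realFieldType) (T : finType) (parent : T -> T)
    (g : T -> R) : Prop :=
  exists lam : {ffun T -> bool} -> R,
    [/\ forall z, 0 <= lam z,
        forall z, ~~ Zset parent z -> lam z = 0,
        \sum_z lam z = 1
      & forall v, g v = \sum_z lam z * (z v)%:R].

Definition in_prod_form (R : realFieldType) (T : finType) (parent : T -> T)
    (g : T -> R) : Prop :=
  exists kappa : T -> R,
    (forall v, 0 <= kappa v <= 1) /\
    (forall v, g v = kappa v * \prod_(u in anc parent v) (1 - kappa u)).

Definition in_polytope (R : realFieldType) (T : finType) (parent : T -> T)
    (g : T -> R) : Prop :=
  (forall v, 0 <= g v <= 1) /\
  (forall v, \sum_(u in ancb parent v) g u <= 1).

(* Main.v *)
Require Import Defs.
From HB Require Import structures.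
From mathcomp Require Import all_boot all_order all_algebra.
Import Order.TTheory GRing.Theory Num.Theory.
Set Implicit Arguments. Unset Strict Implicit. Unset Printing Implicit Defensive.

Lemma root_conn (T : finType) (f : T -> T) r u :
  f r = r -> fconnect f r u -> u = r.
Proof. by move=> hr /iter_findex <-; rewrite iter_fix. Qed.

Lemma conn_cmp (T : finType) (f : T -> T) v u w :
  fconnect f v u -> fconnect f v w -> fconnect f u w \/ fconnect f w u.
Proof.
move=> /iter_findex <- /iter_findex <-.
set i := findex f v u; set j := findex f v w.
case: (leqP i j) => hij.
  by left; rewrite -(subnK hij) iterD; apply: fconnect_iter.
by right; rewrite -(subnK (ltnW hij)) iterD; apply: fconnect_iter.
Qed.

Lemma parent_not_conn (T : finType) (f : T -> T) r v :
  f r = r -> fconnect f v r -> fconnect f (f v) v -> v = r.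
Proof.
move=> hr hvr /iter_findex; set n := findex _ _ _ => hn.
have hv : forall k, iter (k * n.+1) f v = v.
  elim=> [|k IH]; first by []; by rewrite mulSn iterD IH iterSr.
move/iter_findex: hvr; set m := findex _ _ _ => hm.
have hle : m <= m * n.+1 by rewrite leq_pmulr.
have := hv m; rewrite -(subnK hle) iterD hm iter_fix //.
Qed.

Lemma anc_nonroot (T : finType) (f : T -> T) r v :
  f r = r -> (forall x, fconnect f x r) -> v != r -> anc f v = ancb f (f v).
Proof.
move=> hr hreach hvr; apply/setP=> u; rewrite !inE.
apply/andP/idP.
  case=> hu /iter_findex; case: (findex f v u) => [|k]; first by move=> /= e; rewrite e eqxx in hu.
  by rewrite iterSr => <-; apply: fconnect_iter.
move=> hu; split; last exact: connect_trans (fconnect1 f v) hu.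
apply/eqP=> e; subst u.
by move: hvr; rewrite (parent_not_conn hr (hreach v) hu) eqxx.
Qed.

Lemma anc_root (T : finType) (f : T -> T) r :
  f r = r -> anc f r = set0.
Proof.
move=> hr; apply/setP=> u; rewrite !inE.
by apply/andP=> -[hu /(root_conn hr) e]; rewrite e eqxx in hu.
Qed.

Lemma ancb_in (T : finType) (f : T -> T) v : v \in ancb f v.
Proof. by rewrite inE connect0. Qed.

Lemma card_ancb (T : finType) (f : T -> T) r v :
  f r = r -> (forall x, fconnect f x r) -> v != r ->
  #|ancb f v| = (#|ancb f (f v)|).+1.
Proof.
move=> hr hreach hvr; rewrite (cardsD1 v) ancb_in add1n.
by rewrite -[ancb f v :\ v]/(anc f v) (anc_nonroot hr hreach hvr).
Qed.
Local Open Scope ring_scope.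

Lemma Z_sum_le1 (R : realFieldType) (T : finType) (f : T -> T) z v :
  Zset f z -> \sum_(u in ancb f v) ((z u)%:R : R) <= 1.
Proof.
move=> hz.
have hZ : forall a b, a \in anc f b -> ~~ (z b && z a).
  move=> a b hab; move/forallP: hz => /(_ b) /forallP /(_ a) /implyP; exact.
case: (pickP [pred u in ancb f v | z u]) => [u0 /andP[hu0 zu0] | none].
  rewrite (bigD1 u0) //= big1 ?addr0 ?zu0 //.
  move=> u /andP[hu hne]; apply/eqP; rewrite pnatr_eq0 eqb0; apply/negP => zu.
  have hu' : u \in ancb f v by [].
  rewrite !inE in hu0 hu'.
  case: (conn_cmp hu0 hu') => h.
    by have := hZ u u0; rewrite !inE h hne zu0 zu => /(_ isT).
  by have := hZ u0 u; rewrite !inE h eq_sym hne zu0 zu => /(_ isT).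
rewrite big1 ?ler01 // => u hu; have := none u; rewrite /= hu /= => ->; by [].
Qed.

Lemma conv_poly (R : realFieldType) (T : finType) (f : T -> T) (g : T -> R) :
  in_conv_Z f g -> in_polytope f g.
Proof.
case=> lam [h0 hZ h1 hg]; split.
  move=> v; rewrite hg; apply/andP; split.
    by apply: sumr_ge0 => z _; rewrite mulr_ge0.
  rewrite -[X in _ <= X]h1; apply: ler_sum => z _; apply: ler_piMr; [exact: h0 | by case: (z v)].
move=> v.
under eq_bigr => u _ do rewrite hg.
rewrite exchange_big /= -[X in _ <= X]h1; apply: ler_sum => z _.
rewrite -mulr_sumr.
case hz: (Zset f z); first by apply: ler_piMr; [exact: h0 | exact: Z_sum_le1].
by rewrite hZ ?hz // !mul0r.
Qed.

Lemma sum_ancb (R : realFieldType) (T : finType) (f : T -> T) (g : T -> R) u :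
  \sum_(w in ancb f u) g w = g u + \sum_(w in anc f u) g w.
Proof.
rewrite (bigD1 u) ?ancb_in //=; congr (_ + _); apply: eq_bigl => w.
by rewrite /anc !inE andbC.
Qed.

Lemma prod_ancb (R : realFieldType) (T : finType) (f : T -> T) (h : T -> R) u :
  \prod_(w in ancb f u) h w = h u * \prod_(w in anc f u) h w.
Proof.
rewrite (bigD1 u) ?ancb_in //=; congr (_ * _); apply: eq_bigl => w.
by rewrite /anc !inE andbC.
Qed.

Lemma poly_prod (R : realFieldType) (T : finType) (r : T) (f : T -> T)
  (Htree : is_rooted_tree r f) (g : T -> R) :
  in_polytope f g -> in_prod_form f g.
Proof.
case: Htree => hr hreach [hg01 hsum].
pose S u := \sum_(w in anc f u) g w.
pose D u := 1 - S u.
have hgD : forall u, g u <= D u.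
  by move=> u; rewrite /D /S lerBrDr -sum_ancb.
have hD0 : forall u, 0 <= D u.
  move=> u; apply: le_trans (hgD u); by case/andP: (hg01 u).
pose kappa u := if 0 < D u then g u / D u else 0.
have kD : forall u, kappa u * D u = g u.
  move=> u; rewrite /kappa; case: ifP => hpos.
    by rewrite divfK // gt_eqF.
  have hD : D u = 0 by apply/le_anti; rewrite hD0 andbT leNgt hpos.
  rewrite mul0r; apply/le_anti; case/andP: (hg01 u) => -> _.
  by rewrite -hD hgD.
exists kappa; split.
  move=> u; rewrite /kappa; case: ifP => hpos; last by rewrite lexx ler01.
  case/andP: (hg01 u) => g0 _.
  apply/andP; split; first by rewrite divr_ge0 // ltW.
  by rewrite ler_pdivrMr // mul1r hgD.
have key : forall n v, (#|ancb f v| <= n)%N ->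
    \prod_(u in anc f v) (1 - kappa u) = D v.
  elim=> [|n IH] v hn.
    by move: hn; rewrite (cardsD1 v) ancb_in.
  case: (eqVneq v r) => [->|hvr].
    by rewrite /D /S anc_root // !big_set0 subr0.
  rewrite /D /S (anc_nonroot hr hreach hvr) prod_ancb sum_ancb IH.
    by rewrite mulrBl mul1r kD /D /S opprD addrA addrAC.
  by rewrite -ltnS -(card_ancb hr hreach hvr).
move=> v; rewrite (key #|ancb f v|) //; by rewrite kD.
Qed.

Lemma prod_forall (R : realFieldType) (T : finType) (A : {set T}) (b : T -> bool) :
  \prod_(u in A) ((~~ b u)%:R : R) = ([forall u in A, ~~ b u])%:R.
Proof.
case: (pickP [pred u in A | b u]) => [u0 /andP[hu0 bu0] | none].
  rewrite (bigD1 u0) //= bu0 /= mul0r.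
  case: forallP => // H; by have := H u0; rewrite hu0 bu0.
have -> : [forall u in A, ~~ b u].
  apply/forallP => u; apply/implyP => hu; by move: (none u); rewrite /= hu /= => ->.
by rewrite big1 // => u hu; move: (none u); rewrite /= hu /= => ->.
Qed.

Lemma prod_conv (R : realFieldType) (T : finType) (f : T -> T) (g : T -> R) :
  in_prod_form f g -> in_conv_Z f g.
Proof.
case=> kappa [hk hg].
pose w (b : {ffun T -> bool}) := \prod_v (if b v then kappa v else 1 - kappa v).
pose F (b : {ffun T -> bool}) : {ffun T -> bool} :=
  [ffun v => b v && [forall u in anc f v, ~~ b u]].
have FZ : forall b, Zset f (F b).
  move=> b; apply/forallP => v; apply/forallP => u; apply/implyP => hu.
  rewrite !ffunE; apply/negP => /andP[/andP[_ /forallP H] /andP[bu _]].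
  by have := H u; rewrite hu bu.
have w0 : forall b, 0 <= w b.
  move=> b; apply: prodr_ge0 => v _; case: (b v); case/andP: (hk v) => // _ h.
  by rewrite subr_ge0.
have PB : forall G : {ffun T -> bool} -> R,
    \sum_b G b = \sum_z \sum_(b | F b == z) G b.
  by move=> G; rewrite (partition_big F xpredT) //; apply: eq_bigr => z _; apply: eq_bigl => b.
exists (fun z => \sum_(b | F b == z) w b); split.
- by move=> z; apply: sumr_ge0 => b _.
- move=> z hz; apply: big1 => b /eqP e; by rewrite -e FZ in hz.
- rewrite -PB.
  have := bigA_distr_bigA (fun v (x : bool) => if x then kappa v else 1 - kappa v).
  move=> <-; apply: big1 => v _; rewrite big_bool /=; by rewrite addrC subrK.
- move=> v.
  under eq_bigr => z _ do rewrite mulr_suml.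
  have -> : \sum_z \sum_(i | F i == z) w i * (z v)%:R =
            \sum_z \sum_(i | F i == z) w i * (F i v)%:R.
    by apply: eq_bigr => z _; apply: eq_big => // b /eqP ->.
  rewrite -PB.
  pose c (u : T) (x : bool) : R :=
    if u == v then x%:R else if u \in anc f v then (~~ x)%:R else 1.
  have hF : forall b : {ffun T -> bool}, ((F b v)%:R : R) = \prod_u c u (b u).
    move=> b; rewrite (bigD1 v) //= /c eqxx ffunE.
    rewrite (big_mkcond (fun u => u != v)) /=.
    have -> : \prod_u (if u != v then if u == v then ((b u)%:R : R) else
                 if u \in anc f v then (~~ b u)%:R else 1 else 1) =
              \prod_(u in anc f v) ((~~ b u)%:R : R).
      rewrite [RHS]big_mkcond; apply: eq_bigr => u _.
      case: eqVneq => [->|//]; by rewrite /anc !inE eqxx.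
    by rewrite prod_forall; case: (b v); rewrite /= ?mul1r ?mul0r.
  under eq_bigr => b _ do rewrite hF /w -big_split /=.
  rewrite -(bigA_distr_bigA (fun u (x : bool) =>
             (if x then kappa u else 1 - kappa u) * c u x)).
  rewrite hg [RHS](bigD1 v) //= big_bool /c eqxx /= mulr1 mulr0 addr0.
  congr (_ * _).
  rewrite big_mkcond [RHS]big_mkcond; apply: eq_bigr => u _.
  rewrite big_bool /=; case: eqVneq => [->|hne] /=.
    by rewrite /anc !inE eqxx.
  case: (u \in anc f v); by rewrite /= ?mulr0 ?mulr1 ?add0r ?addr0 // addrC subrK.
Qed.

Theorem proposition1 (R : realFieldType) (T : finType) (root : T)
    (parent : T -> T) (Htree : is_rooted_tree root parent) (g : T -> R) :
  (in_conv_Z parent g <-> in_prod_form parent g) /\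
  (in_prod_form parent g <-> in_polytope parent g).
Proof.
have cp := @conv_poly R T parent g.
have pp := @poly_prod R T root parent Htree g.
have pc := @prod_conv R T parent g.
by split; split; auto.
Qed.
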